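(* For every digraph $X$, $\lambda_1(X)\le \rho(X)\le 3\lambda_1(X)$. Both inequalities are tight, i.e., each holds with equality for some digraph with at least one arc.
   Context: A digraph $X$ has a finite vertex set $V(X)$ and an arc set $E(X)$ of ordered pairs of distinct vertices; $\{x,y\}$ is a digon if both $xy$ and $yx$ are arcs. The Hermitian adjacency matrix $H(X)$ has $(u,v)$-entry $1$ if $uv$ and $vu$ are arcs, $i$ if $uv$ is an arc and $vu$ is not, $-i$ if $vu$ is an arc and $uv$ is not, and $0$ otherwise. $H(X)$ is Hermitian, so its eigenvalues are real; $\lambda_1(X)$ denotes the largest eigenvalue of $H(X)$ and $\rho(X)$ the maximum absolute value of an eigenvalue of $H(X)$. *)

(* Defs.v *)
From mathcomp Require Import all_boot all_order all_algebra all_field.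
Set Implicit Arguments. Unset Strict Implicit. Unset Printing Implicit Defensive.
Import Order.TTheory GRing.Theory Num.Theory.
Local Open Scope ring_scope.

(* A digraph on the vertex set 'I_n is given by an arc relation
   [arc : rel 'I_n] that is irreflexive (arcs join distinct vertices). *)

Definition hermAdj (n : nat) (arc : rel 'I_n) : 'M[algC]_n :=
  \matrix_(u, v)
    (if arc u v then (if arc v u then 1 else 'i)
     else (if arc v u then - 'i else 0)).

Definition is_lambda1 (n : nat) (H : 'M[algC]_n) (l : algC) : Prop :=
  eigenvalue H l /\ (forall a, eigenvalue H a -> a <= l).

Definition is_rho (n : nat) (H : 'M[algC]_n) (r : algC) : Prop :=
  (exists2 a, eigenvalue H a & r = `|a|) /\
  (forall a, eigenvalue H a -> `|a| <= r).

(* Main.v *)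
Require Import Defs.
From mathcomp Require Import all_boot all_order all_algebra all_field.
From mathcomp Require Import ring.
Import Order.TTheory GRing.Theory Num.Theory.
Local Open Scope ring_scope.


Section S.
Variables (n : nat) (arc : rel 'I_n).
Local Notation H := (hermAdj arc).

Lemma hermAdj_herm u w : H u w = (H w u)^*.
Proof.
rewrite !mxE; case: (arc u w); case: (arc w u) => //=.
- by rewrite conjC1.
- by rewrite rmorphN /= conjCi opprK.
- by rewrite conjCi.
- by rewrite conjC0.
Qed.

Lemma hermAdj_hermsym : H \is hermsymmx.
Proof.
apply/eqP/matrixP => u w; rewrite scale1r !mxE.
by have := hermAdj_herm u w; rewrite !mxE.
Qed.

Definition qf (M : 'M[algC]_n) (x : 'rV[algC]_n) :=
  \sum_u \sum_w x 0 u * M u w * (x 0 w)^*.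
Definition nrm (x : 'rV[algC]_n) := \sum_u x 0 u * (x 0 u)^*.

Lemma qfE (M : 'M[algC]_n) x : (x *m M *m (map_mx (@Num.conj _) x^T)) 0 0 = qf M x.
Proof.
rewrite mxE /qf; under eq_bigr => w _ do rewrite !mxE big_distrl /=.
rewrite exchange_big /=; apply: eq_bigr => u _; apply: eq_bigr => w _.
by [].
Qed.

Lemma nrmE x : (x *m (map_mx (@Num.conj _) x^T)) 0 0 = nrm x.
Proof. by rewrite mxE; apply: eq_bigr => u _; rewrite !mxE. Qed.

Lemma nrm_gt0 x : x != 0 -> 0 < nrm x.
Proof.
move=> xn0.
have [i xi] : exists i, x 0 i != 0.
  apply/existsP; apply: contraNT xn0; rewrite negb_exists => /forallP h.
  by apply/eqP/rowP => j; rewrite mxE; apply/eqP; rewrite -[_ == _]negbK h.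
rewrite /nrm (bigD1 i) //= ltr_wpDr// ?sumr_ge0 ?mul_conjC_gt0 //.
by move=> j _; rewrite mul_conjC_ge0.
Qed.

Lemma nrm_ge0 x : 0 <= nrm x.
Proof. by rewrite sumr_ge0 // => j _; rewrite mul_conjC_ge0. Qed.

Lemma qf_real x : (qf H x)^* = qf H x.
Proof.
rewrite /qf rmorph_sum /= exchange_big /=; apply: eq_bigr => w _.
rewrite rmorph_sum; apply: eq_bigr => u _.
rewrite !rmorphM /= conjCK -hermAdj_herm.
by ring.
Qed.



Lemma rayleigh (M : 'M[algC]_n) (l : algC) : M \is hermsymmx ->
  (forall a, eigenvalue M a -> a <= l) -> forall x, qf M x <= l * nrm x.
Proof.
move=> hM hl x.
have /orthomx_spectralP E := hermitian_normalmx hM.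
set P := spectralmx M in E; set d := spectral_diag M in E.
have PU : P \is unitarymx by apply: spectral_unitarymx.
have Pu : P \in unitmx by apply: spectral_unit.
have iP : invmx P = map_mx (@Num.conj _) P^T by apply: invmx_unitary.
have PtP : map_mx (@Num.conj _) P^T *m P = 1%:M by rewrite -iP mulVmx.
have eig : forall i, eigenvalue M (d 0 i).
  move=> i; apply/eigenvalueP; exists (row i P).
    rewrite -row_mul {1}E !mulmxA mulmxV // mul1mx.
    by rewrite row_mul row_diag_mx -scalemxAl -rowE.
  apply/eqP => r0.
  have : (row i P *m map_mx (@Num.conj _) P^T) 0 i = 1.
    by rewrite -row_mul -iP mulmxV // !mxE eqxx.
  by rewrite r0 mul0mx mxE => /eqP; rewrite eq_sym oner_eq0.
set y := x *m map_mx (@Num.conj _) P^T.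
have yt : map_mx (@Num.conj _) y^T = P *m map_mx (@Num.conj _) x^T.
  rewrite /y trmx_mul map_mxM; congr (_ *m _).
  by apply/matrixP => i j; rewrite !mxE /= conjCK.
have -> : nrm x = nrm y.
  by rewrite -!nrmE yt /y !mulmxA -(mulmxA x) PtP mulmx1.
have -> : qf M x = qf (diag_mx d) y.
  by rewrite -!qfE yt /y {1}E iP !mulmxA.
rewrite /qf /nrm mulr_sumr; apply: ler_sum => u _.
rewrite (bigD1 u) //= big1 ?addr0; last first.
  by move=> w wu; rewrite !mxE eq_sym (negbTE wu) mulr0n mulr0 mul0r.
rewrite !mxE eqxx mulr1n mulrAC [X in _ <= X]mulrC; apply: ler_wpM2l; first exact: mul_conjC_ge0.
exact: hl.
Qed.

Lemma eig_real a : eigenvalue H a -> a \is Num.real.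
Proof.
move=> /eigenvalueP [v va vn0].
have e : qf H v = a * nrm v by rewrite -qfE -nrmE va -scalemxAl mxE.
have N0 : nrm v != 0 by rewrite gt_eqF // nrm_gt0.
have Nr : (nrm v)^* = nrm v by apply/CrealP; rewrite gtr0_real // nrm_gt0.
apply/CrealP; have := qf_real v; rewrite e rmorphM /= Nr => /eqP.
by rewrite (can2_eq (mulfK N0) (divfK N0)) mulfK // => /eqP.
Qed.

Definition Sm u w := H u w + H w u.

Lemma Sm_ge0 u w : 0 <= Sm u w.
Proof.
rewrite /Sm !mxE; case: (arc u w); case: (arc w u) => //=;
  rewrite ?addNr ?addrN ?addr0 //.
by rewrite addr_ge0 ?ler01.
Qed.

Lemma qS x : qf H x + qf H (map_mx (@Num.conj _) x) =
  \sum_u \sum_w x 0 u * Sm u w * (x 0 w)^*.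
Proof.
rewrite /qf [X in _ + X]exchange_big /= -big_split /=; apply: eq_bigr => u _.
rewrite -big_split /=; apply: eq_bigr => w _.
have hx i : map_mx (@Num.conj _) x 0 i = (x 0 i)^* by rewrite mxE.
rewrite !hx conjCK /Sm; ring.
Qed.

Lemma nrm_conj (x : 'rV[algC]_n) : nrm (map_mx (@Num.conj _) x) = nrm x.
Proof. by apply: eq_bigr => u _; rewrite !mxE /= conjCK mulrC. Qed.

Lemma nrm_abs (x : 'rV[algC]_n) : nrm (map_mx (fun z : algC => `|z|) x) = nrm x.
Proof. by apply: eq_bigr => u _; rewrite !mxE conj_normC -expr2 normCK. Qed.

Lemma abs_conj (x : 'rV[algC]_n) : map_mx (@Num.conj _) (map_mx (fun z : algC => `|z|) x) = map_mx (fun z : algC => `|z|) x.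
Proof. by apply/matrixP => i j; rewrite !mxE /= conj_normC. Qed.

Lemma rho_bound l a : (forall b, eigenvalue H b -> b <= l) ->
  eigenvalue H a -> `|a| <= 3 * l.
Proof.
move=> hl ea; have ar := eig_real _ ea; have hla := hl _ ea.
have [a0|a0] := real_ge0P ar.
  rewrite (le_trans hla) // ler_peMl ?(le_trans a0) //.
  by rewrite ler1n.

have R := @rayleigh H l hermAdj_hermsym hl.
move: ea => /eigenvalueP [v va vn0].
have Np : 0 < nrm v by apply: nrm_gt0.
rewrite -(ler_pM2r Np).
have e1 : qf H v = a * nrm v by rewrite -qfE -nrmE va -scalemxAl mxE.
set vc := map_mx (@Num.conj _) v.
set va' := map_mx (fun z : algC => `|z|) v.
have e2 : qf H vc <= l * nrm v by rewrite -(nrm_conj v) R.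
have e3 : qf H va' <= l * nrm v by rewrite -(nrm_abs v) R.
set T := \sum_u \sum_w v 0 u * Sm u w * (v 0 w)^*.
have e4 : qf H v + qf H vc = T by rewrite qS.
have e5 : `|T| <= qf H va' + qf H va'.
  have qSa := qS va'; rewrite /va' abs_conj -/va' in qSa.
  rewrite qSa; apply: (le_trans (ler_norm_sum _ _ _)).
  apply: ler_sum => u _; apply: (le_trans (ler_norm_sum _ _ _)).
  apply: ler_sum => w _.
  by rewrite !mxE !normrM norm_conjC (ger0_norm (Sm_ge0 _ _)) conj_normC.
have qr y : qf H y \is Num.real by apply/CrealP; apply: qf_real.
have Tr : T \is Num.real by rewrite -e4 rpredD.
have e6 : - T <= `|T| by rewrite -normrN real_ler_norm // rpredN.
have -> : - a * nrm v = qf H vc - T by rewrite -e4 e1; ring.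
apply: (le_trans (lerD e2 (le_trans e6 (le_trans e5 (lerD e3 e3))))).
rewrite le_eqVlt; apply/orP; left; apply/eqP; ring.
Qed.
End S.


Lemma rank1_mul n (M : 'M[algC]_n) (c : 'I_n -> algC)
  (hM : forall i j, M i j = (i == j)%:R - (c i)^* * c j) (v : 'rV_n) j :
  (v *m M) 0 j = v 0 j - (\sum_k v 0 k * (c k)^*) * c j.
Proof.
rewrite mxE; under eq_bigr => i _ do rewrite hM mulrBr.
rewrite sumrB mulr_suml; congr (_ - _); last first.
  by apply: eq_bigr => i _; rewrite mulrA.
rewrite (bigD1 j) //= big1 ?addr0 ?eqxx ?mulr1 //.
by move=> i /negbTE ->; rewrite mulr0.
Qed.

Lemma rank1_eig n (M : 'M[algC]_n) (c : 'I_n -> algC) :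
  (forall i j, M i j = (i == j)%:R - (c i)^* * c j) ->
  forall a, eigenvalue M a -> a = 1 \/ a = 1 - \sum_k c k * (c k)^*.
Proof.
move=> hM a /eigenvalueP [v va vn0].
set s := \sum_k v 0 k * (c k)^*.
have ej j : a * v 0 j = v 0 j - s * c j.
  by move/rowP: va => /(_ j); rewrite (@rank1_mul _ _ _ hM) mxE => <-.
have [s0|sn0] := eqVneq s 0.
  left.
  have [j vj] : exists j, v 0 j != 0.
    apply/existsP; apply: contraNT vn0; rewrite negb_exists => /forallP h.
    by apply/eqP/rowP => k; rewrite mxE; apply/eqP; rewrite -[_ == _]negbK h.
  by have := ej j; rewrite s0 mul0r subr0 -{2}[v 0 j]mul1r => /(mulIf vj).
right.
have : a * s = s - s * \sum_k c k * (c k)^*.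
  rewrite /s mulr_sumr mulr_sumr -sumrB; apply: eq_bigr => k _.
  by rewrite mulrA ej -/s; ring.
move=> e; apply: (mulIf sn0); rewrite e; ring.
Qed.


Definition arc4 : rel 'I_4 := fun u v =>
  ((val u, val v) \in [:: (0,1); (2,0); (0,3); (3,0); (1,2); (2,1); (1,3); (3,2)]%N).
Definition c4 (i : 'I_4) : algC := nth 0 [:: 1; -'i; 'i; -1] i.

Lemma H4E i j : hermAdj arc4 i j = (i == j)%:R - (c4 i)^* * c4 j.
Proof.
have h : ('i : algC) ^+ 2 = -1 by rewrite sqrCi.
rewrite mxE.
case: i => [[|[|[|[|i]]]] Hi] //; case: j => [[|[|[|[|j]]]] Hj] //.
all: rewrite /arc4 /c4 /=.
all: rewrite ?rmorphN /= ?conjC1 ?conjCi; ring: h.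
Qed.

Lemma rank1_eig1 n (M : 'M[algC]_n) (c : 'I_n -> algC)
  (hM : forall i j, M i j = (i == j)%:R - (c i)^* * c j) (v : 'rV_n) :
  v != 0 -> \sum_k v 0 k * (c k)^* = 0 -> eigenvalue M 1.
Proof.
move=> vn0 s0; apply/eigenvalueP; exists v => //.
by apply/rowP => j; rewrite (@rank1_mul _ _ _ hM) s0 mul0r subr0 mxE mul1r.
Qed.

Lemma rank1_eigc n (M : 'M[algC]_n) (c : 'I_n -> algC)
  (hM : forall i j, M i j = (i == j)%:R - (c i)^* * c j) (k : 'I_n) :
  c k != 0 -> eigenvalue M (1 - \sum_k c k * (c k)^*).
Proof.
move=> ck; apply/eigenvalueP; exists (\row_j c j).
  apply/rowP => j; rewrite (@rank1_mul _ _ _ hM) !mxE.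
  under eq_bigr => i _ do rewrite mxE.
  ring.
by apply/eqP => /rowP /(_ k); rewrite !mxE; apply/eqP.
Qed.

Definition arc2 : rel 'I_2 := fun u v => u != v.
Definition c2 (i : 'I_2) : algC := nth 0 [:: 1; -1] i.

Lemma H2E i j : hermAdj arc2 i j = (i == j)%:R - (c2 i)^* * c2 j.
Proof.
rewrite mxE.
case: i => [[|[|i]] Hi] //; case: j => [[|[|j]] Hj] //.
all: rewrite /arc2 /c2 /=.
all: rewrite ?rmorphN /= ?conjC1; ring.
Qed.

Lemma m2 : \sum_k c2 k * (c2 k)^* = 2.
Proof.
rewrite !big_ord_recl big_ord0 /c2 /=.
rewrite ?rmorphN /= ?conjC1; ring.
Qed.

Lemma m4 : \sum_k c4 k * (c4 k)^* = 4.
Proof.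
have h : ('i : algC) ^+ 2 = -1 by rewrite sqrCi.
rewrite !big_ord_recl big_ord0 /c4 /=.
rewrite ?rmorphN /= ?conjC1 ?conjCi; ring: h.
Qed.

Theorem theorem5p6 :
  (forall (n : nat) (arc : rel 'I_n), irreflexive arc ->
     forall l r : algC,
       is_lambda1 (hermAdj arc) l -> is_rho (hermAdj arc) r ->
       l <= r /\ r <= 3 * l)
  /\
  (exists (n : nat) (arc : rel 'I_n),
     [/\ irreflexive arc, (exists u v, arc u v) &
       exists l r : algC,
         [/\ is_lambda1 (hermAdj arc) l, is_rho (hermAdj arc) r & l = r]])
  /\
  (exists (n : nat) (arc : rel 'I_n),
     [/\ irreflexive arc, (exists u v, arc u v) &
       exists l r : algC,
         [/\ is_lambda1 (hermAdj arc) l, is_rho (hermAdj arc) r & r = 3 * l]]).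
Proof.
split.
  move=> n arc _ l r [el hl] [[a ea ->] hr]; split.
    exact: le_trans (real_ler_norm (@eig_real n arc l el)) (hr l el).
  exact: (@rho_bound n arc l a hl ea).
split.
  exists 2%N, arc2; split.
  - by move=> u; rewrite /arc2 eqxx.
  - by exists (@Ordinal 2 0 isT), (@Ordinal 2 1 isT).
  have E := @rank1_eig _ _ _ H2E; rewrite m2 in E.
  have e1 : eigenvalue (hermAdj arc2) 1.
    apply: (@rank1_eig1 _ _ _ H2E (\row_j 1)).
      by apply/eqP => /rowP /(_ ord0); rewrite !mxE; apply/eqP; rewrite oner_eq0.
    rewrite !big_ord_recl big_ord0 !mxE /c2 /= rmorphN /= conjC1; ring.
  exists 1, 1; split => //.
    split => // a /E [->|->] //.
    by rewrite lerBlDr lerDl ler0n.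
  split; first by exists 1; rewrite ?normr1.
  have e : (1 - 2 : algC) = -1 by ring.
  by move=> a /E [->|->]; rewrite ?normr1 // e normrN normr1.
exists 4%N, arc4; split.
- by move=> [[|[|[|[|u]]]] Hu].
- by exists (@Ordinal 4 0 isT), (@Ordinal 4 1 isT).
have E := @rank1_eig _ _ _ H4E; rewrite m4 in E.
have e1 : eigenvalue (hermAdj arc4) 1.
  apply: (@rank1_eig1 _ _ _ H4E (\row_j (if (j == 0 :> nat) || (j == 3 :> nat) then 1 else 0))).
    by apply/eqP => /rowP /(_ ord0); rewrite !mxE; apply/eqP; rewrite oner_eq0.
  rewrite !big_ord_recl big_ord0 !mxE /c4 /= ?rmorphN /= ?conjC1 ?conjCi; ring.
have e3 : eigenvalue (hermAdj arc4) (1 - 4).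
  rewrite -m4; apply: (@rank1_eigc _ _ _ H4E (@Ordinal 4 0 isT)).
  by rewrite /c4 /= oner_eq0.
exists 1, 3; split.
- split => // a /E [->|->] //.
  by rewrite lerBlDr lerDl ler0n.
- split.
    exists (1 - 4) => //.
    have -> : (1 - 4 : algC) = - 3 by ring.
    by rewrite normrN ger0_norm ?ler0n.
  move=> a /E [->|->]; first by rewrite normr1 ler1n.
  have -> : (1 - 4 : algC) = - 3 by ring.
  by rewrite normrN ger0_norm ?ler0n.
- by rewrite mulr1.
Qed.
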